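(* Consider the Bayesian setting described in the context. For any deterministic auction that satisfies (VP), (NPT), and (IC) ex-post (where bidders may misreport their valuation arbitrarily and their budget only downward), together with the budget constraints $P_i(\vec v,\vec b)\le b_i$ and the size constraints $x_i(\vec v,\vec b)\le\kappa_i$, the interim quantities $x_{ikm}$ and $P_{ikm}$ of the auction form a feasible solution of the linear program below. In particular, the optimal LP value is an upper bound on the expected revenue of the revenue-maximizing such auction. LP: maximize $\sum_{i,k,m}f_{ikm}P_{ikm}$ subject to $\sum_{i,k,m}f_{ikm}x_{ikm}\le1$; $s_kx_{ikm}-P_{ikm}\ge s_kx_{ilt}-P_{ilt}$ for all $i,k,l$ and all $t<m$; $s_kx_{ikm}-P_{ikm}\ge0$ for all $i,k,m$; $P_{ikm}\in[0,\beta_m]$ and $x_{ikm}\in[0,\kappa_i]$ for all $i,k,m$.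
   Context: There are $n$ bidders and one unit of an infinitely divisible good. Bidder $i$ has a private valuation per unit taking values in $0=s_0\le s_1<s_2<\dots<s_K$, a private budget taking values in $0=\beta_0\le\beta_1<\dots<\beta_M$, and a public size constraint $\kappa_i$ (the maximum amount it wants). The auctioneer knows independent (across bidders) distributions $f_{ikm}=\Pr[v_i=s_k\text{ and }b_i=\beta_m]$. A deterministic auction maps reported $(\vec v,\vec b)$ to allocations $x_i(\vec v,\vec b)$ and prices $P_i(\vec v,\vec b)$, with $\sum_ix_i\le1$. A bidder's utility is $-\infty$ if the price exceeds the true budget and (true valuation)$\times$(allocation) minus price otherwise. (VP): truthful reporting gives nonnegative utility; (NPT): prices are nonnegative; (IC): truthful reporting maximizes utility, for every report of the other bidders. The interim quantities are $x_{ikm}=\mathbb E_{\vec v_{-i},\vec b_{-i}}[x_i(s_k,\beta_m,\vec v_{-i},\vec b_{-i})]$ and $P_{ikm}=\mathbb E_{\vec v_{-i},\vec b_{-i}}[P_i(s_k,\beta_m,\vec v_{-i},\vec b_{-i})]$, where the other bidders' reports are drawn from their distributions. Expected revenue is $\mathbb E[\sum_iP_i(\vec v,\vec b)]$ with $(\vec v,\vec b)$ drawn from the distributions. *)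

(* Defs.v *)
From HB Require Import structures.
From mathcomp Require Import all_boot all_order all_algebra.
Set Implicit Arguments. Unset Strict Implicit. Unset Printing Implicit Defensive.
Import Order.TTheory GRing.Theory Num.Theory.
Local Open Scope ring_scope.

(* A type of bidder i is a pair (k, m) : valuation index k (value s_k) and
   budget index m (budget beta_m).  A profile gives a type to each bidder. *)
Definition profile (n K M : nat) := {ffun 'I_n -> 'I_K.+1 * 'I_M.+1}.

Definition upd (n K M : nat) (q : profile n K M) (i : 'I_n)
  (a : 'I_K.+1 * 'I_M.+1) : profile n K M :=
  [ffun j => if j == i then a else q j].

(* Utility: None stands for -infinity (price exceeds the true budget). *)
Definition utility (R : realFieldType) (v b alloc price : R) : option R :=
  if price <= b then Some (v * alloc - price) else None.

Definition ule (R : realFieldType) (a c : option R) : bool :=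
  match a, c with
  | None, _ => true
  | Some _, None => false
  | Some a, Some c => a <= c
  end.

Section Auction.
Variables (R : realFieldType) (n K M : nat).
Variables (s : 'I_K.+1 -> R) (beta : 'I_M.+1 -> R) (kappa : 'I_n -> R).
Variable (f : 'I_n -> 'I_K.+1 -> 'I_M.+1 -> R).
Variables (x P : profile n K M -> 'I_n -> R).

Definition ftype (i : 'I_n) (a : 'I_K.+1 * 'I_M.+1) : R := f i a.1 a.2.

Definition prob_profile (q : profile n K M) : R := \prod_(j < n) ftype j (q j).

Definition prob_others (i : 'I_n) (q : profile n K M) : R :=
  \prod_(j < n | j != i) ftype j (q j).

Definition x_int (i : 'I_n) (k : 'I_K.+1) (m : 'I_M.+1) : R :=
  \sum_(q : profile n K M | q i == (k, m)) prob_others i q * x q i.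
Definition P_int (i : 'I_n) (k : 'I_K.+1) (m : 'I_M.+1) : R :=
  \sum_(q : profile n K M | q i == (k, m)) prob_others i q * P q i.

Definition expected_revenue : R :=
  \sum_(q : profile n K M) prob_profile q * \sum_(i < n) P q i.

Definition feasible_alloc : Prop :=
  forall q : profile n K M, (forall i, 0 <= x q i) /\ \sum_(i < n) x q i <= 1.
Definition VP : Prop :=
  forall (q : profile n K M) i, ule (Some 0) (utility (s (q i).1) (beta (q i).2) (x q i) (P q i)).
Definition NPT : Prop := forall (q : profile n K M) i, 0 <= P q i.
Definition IC : Prop :=
  forall (q : profile n K M) i (l : 'I_K.+1) (t : 'I_M.+1), (t <= (q i).2)%N ->
    ule (utility (s (q i).1) (beta (q i).2)
                 (x (upd q i (l, t)) i) (P (upd q i (l, t)) i))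
        (utility (s (q i).1) (beta (q i).2) (x q i) (P q i)).
Definition budget_constraint : Prop := forall (q : profile n K M) i, P q i <= beta (q i).2.
Definition size_constraint : Prop := forall (q : profile n K M) i, x q i <= kappa i.

End Auction.

Definition LP_objective (R : realFieldType) (n K M : nat)
  (f : 'I_n -> 'I_K.+1 -> 'I_M.+1 -> R) (Q : 'I_n -> 'I_K.+1 -> 'I_M.+1 -> R) : R :=
  \sum_(i < n) \sum_(k < K.+1) \sum_(m < M.+1) f i k m * Q i k m.

Definition LP_feasible (R : realFieldType) (n K M : nat)
  (s : 'I_K.+1 -> R) (beta : 'I_M.+1 -> R) (kappa : 'I_n -> R)
  (f : 'I_n -> 'I_K.+1 -> 'I_M.+1 -> R)
  (X Q : 'I_n -> 'I_K.+1 -> 'I_M.+1 -> R) : Prop :=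
  [/\ \sum_(i < n) \sum_(k < K.+1) \sum_(m < M.+1) f i k m * X i k m <= 1,
      (forall i k l (m t : 'I_M.+1), (t < m)%N ->
         s k * X i k m - Q i k m >= s k * X i l t - Q i l t),
      (forall i k m, s k * X i k m - Q i k m >= 0),
      (forall i k m, 0 <= Q i k m <= beta m) &
      (forall i k m, 0 <= X i k m <= kappa i)].

(* Main.v *)
Require Import Defs.
From HB Require Import structures.
From mathcomp Require Import all_boot all_order all_algebra.
Import Order.TTheory GRing.Theory Num.Theory.
Local Open Scope ring_scope.
Set Implicit Arguments. Unset Strict Implicit.

Section L.
Variables (R : realFieldType) (n K M : nat).
Variable (f : 'I_n -> 'I_K.+1 -> 'I_M.+1 -> R).
Hypothesis hf0 : forall i k m, 0 <= f i k m.
Hypothesis hf1 : forall i, \sum_(k < K.+1) \sum_(m < M.+1) f i k m = 1.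

Lemma ftype_sum j : \sum_(c : 'I_K.+1 * 'I_M.+1) ftype f j c = 1.
Proof. by rewrite -(hf1 j) pair_big. Qed.

Lemma prob_split (q : profile n K M) i :
  prob_profile f q = ftype f i (q i) * prob_others f i q.
Proof. by rewrite /prob_profile (bigD1 i). Qed.

Lemma others_ge0 i (q : profile n K M) : 0 <= prob_others f i q.
Proof. apply: prodr_ge0 => j _; exact: hf0. Qed.

Lemma total_prob : \sum_(q : profile n K M) prob_profile f q = 1.
Proof.
rewrite /prob_profile.
have := bigA_distr_bigA (fun (j : 'I_n) (c : 'I_K.+1 * 'I_M.+1) => ftype f j c).
move=> <-. by rewrite big1 // => j _; rewrite ftype_sum.
Qed.

Lemma others_sum i a :
  \sum_(q : profile n K M | q i == a) prob_others f i q = 1.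
Proof.
pose F := fun (j : 'I_n) (c : 'I_K.+1 * 'I_M.+1) =>
  if j == i then (c == a)%:R else ftype f j c.
have E : forall q : profile n K M, \prod_(j < n) F j (q j) =
   (q i == a)%:R * prob_others f i q.
  move=> q; rewrite (bigD1 i) //= /F eqxx; congr (_ * _).
  by apply: eq_bigr => j /negbTE ->.
rewrite big_mkcond /=.
transitivity (\sum_(q : profile n K M) \prod_(j < n) F j (q j)).
  by apply: eq_bigr => q _; rewrite E; case: ifP; rewrite ?mul1r ?mul0r.
have := bigA_distr_bigA F; move=> <-.
apply: big1 => j _; rewrite /F; case: eqP => _; last exact: ftype_sum.
rewrite (bigD1 a) //= eqxx big1 ?addr0 // => c /negbTE ->; done.
Qed.

Lemma key (G : profile n K M -> 'I_n -> R) :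
  \sum_(i < n) \sum_(k < K.+1) \sum_(m < M.+1) f i k m *
     (\sum_(q : profile n K M | q i == (k, m)) prob_others f i q * G q i)
  = \sum_(q : profile n K M) prob_profile f q * \sum_(i < n) G q i.
Proof.
under [RHS]eq_bigr do rewrite mulr_sumr.
rewrite [RHS]exchange_big /=; apply: eq_bigr => i _.
rewrite pair_big /=.
transitivity (\sum_(c : 'I_K.+1 * 'I_M.+1) \sum_(q : profile n K M | q i == c)
   prob_profile f q * G q i).
  apply: eq_bigr => -[k m] _ /=; rewrite mulr_sumr; apply: eq_bigr => q /eqP qi.
  by rewrite (prob_split q i) qi /ftype /= mulrA.
rewrite (exchange_big_dep xpredT) //=; apply: eq_bigr => q _.
by rewrite (big_pred1 (q i)) // => c; rewrite eq_sym.
Qed.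

Definition swp i (a b : 'I_K.+1 * 'I_M.+1) (q : profile n K M) : profile n K M :=
  [ffun j => if j == i then (if q i == a then b else if q i == b then a else q i) else q j].

Lemma swpK i a b : involutive (swp i a b).
Proof.
move=> q; apply/ffunP => j; rewrite /swp !ffunE.
case: eqP => [->|//]; rewrite !eqxx.
case: (eqVneq (q i) a) => [qa|qa].
  case: (eqVneq b a) => [->|ba]; first by rewrite qa.
  by rewrite eqxx.
case: (eqVneq (q i) b) => [qb|qb].
  by rewrite eqxx qb.
by rewrite ifN // ifN.
Qed.

Lemma swap_sum i a b (G : profile n K M -> R) :
  \sum_(q : profile n K M | q i == b) prob_others f i q * G q =
  \sum_(q : profile n K M | q i == a) prob_others f i q * G (upd q i b).
Proof.
rewrite (reindex_inj (can_inj (swpK i a b))) /=.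
have Hp : forall q, (swp i a b q i == b) = (q i == a).
  move=> q; rewrite /swp ffunE eqxx.
  case: ifP => [_|qa]; first by rewrite eqxx.
  case: ifP => [/eqP qb|qb]; last by [].
  by rewrite -qb eq_sym qa.
apply: eq_big => q; first exact: Hp.
rewrite Hp => /eqP qa; congr (_ * _).
  by apply: eq_bigr => j /negbTE ji; rewrite /swp ffunE ji.
congr G; apply/ffunP => j; rewrite /swp /upd !ffunE qa eqxx.
by case: eqP.
Qed.
Lemma lin_comb (c : R) (F G H : profile n K M -> R) (p : pred (profile n K M)) :
  c * (\sum_(q | p q) H q * F q) - \sum_(q | p q) H q * G q =
  \sum_(q | p q) H q * (c * F q - G q).
Proof.
rewrite mulr_sumr -sumrB; apply: eq_bigr => q _.
by rewrite mulrBr mulrCA.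
Qed.
End L.


Theorem lemma7 (R : realFieldType) (n K M : nat)
  (s : 'I_K.+1 -> R) (beta : 'I_M.+1 -> R) (kappa : 'I_n -> R)
  (f : 'I_n -> 'I_K.+1 -> 'I_M.+1 -> R)
  (x P : profile n K M -> 'I_n -> R)
  (* valuations 0 = s_0 <= s_1 < s_2 < ... < s_K *)
  (hs0 : s ord0 = 0)
  (hs : forall k k' : 'I_K.+1, (0 < k)%N -> (k < k')%N -> s k < s k')
  (hs01 : forall k : 'I_K.+1, 0 <= s k)
  (* budgets 0 = beta_0 <= beta_1 < ... < beta_M *)
  (hb0 : beta ord0 = 0)
  (hb : forall m m' : 'I_M.+1, (0 < m)%N -> (m < m')%N -> beta m < beta m')
  (hb01 : forall m : 'I_M.+1, 0 <= beta m)
  (hkappa : forall i, 0 <= kappa i)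
  (* each f i is a probability distribution on types *)
  (hf0 : forall i k m, 0 <= f i k m)
  (hf1 : forall i, \sum_(k < K.+1) \sum_(m < M.+1) f i k m = 1)
  (* the auction *)
  (hfeas : feasible_alloc x)
  (hVP : VP s beta x P) (hNPT : NPT P) (hIC : IC s beta x P)
  (hbud : budget_constraint beta P) (hsize : size_constraint kappa x) :
  LP_feasible s beta kappa f (x_int f x) (P_int f P) /\
  (forall U : R,
     (forall X Q, LP_feasible s beta kappa f X Q -> LP_objective f Q <= U) ->
     expected_revenue f P <= U).
Proof.
have pp0 : forall q : profile n K M, 0 <= prob_profile f q.
  by move=> q; apply: prodr_ge0 => j _; exact: hf0.
have bmono : forall t m : 'I_M.+1, (t < m)%N -> beta t <= beta m.
  move=> t m tm; case: (posnP t) => [t0|tp].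
    have -> : t = ord0 by apply: val_inj.
    by rewrite hb0.
  exact: ltW (hb _ _ tp tm).
have feas : LP_feasible s beta kappa f (x_int f x) (P_int f P).
  split.
  - rewrite /x_int (key f x) -(total_prob hf1).
    apply: ler_sum => q _; apply: ler_piMr => //; exact: (hfeas q).2.
  - move=> i k l m t tm.
    have Ex : x_int f x i l t = \sum_(q : profile n K M | q i == (k, m))
        prob_others f i q * x (upd q i (l, t)) i :=
      swap_sum f i (k, m) (l, t) (fun q => x q i).
    have EP : P_int f P i l t = \sum_(q : profile n K M | q i == (k, m))
        prob_others f i q * P (upd q i (l, t)) i :=
      swap_sum f i (k, m) (l, t) (fun q => P q i).
    rewrite Ex EP /x_int /P_int !lin_comb.
    apply: ler_sum => q /eqP qi; apply: ler_wpM2l; first exact: others_ge0.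
    have := hIC q i l t; rewrite qi /= => /(_ (ltnW tm)).
    have ui : upd q i (l, t) i = (l, t) by rewrite /upd ffunE eqxx.
    have hP := hbud (upd q i (l, t)) i; rewrite ui /= in hP.
    have hq := hbud q i; rewrite qi /= in hq.
    by rewrite /utility hq (le_trans hP (bmono _ _ tm)).
  - move=> i k m; rewrite /x_int /P_int lin_comb.
    apply: sumr_ge0 => q /eqP qi; apply: mulr_ge0; first exact: others_ge0.
    have := hVP q i; rewrite /utility hbud qi /=.
    by rewrite subr_ge0.
  - move=> i k m; apply/andP; split.
      apply: sumr_ge0 => q _; apply: mulr_ge0; [exact: others_ge0|exact: hNPT].
    rewrite /P_int -[X in _ <= X]mulr1 -(others_sum hf1 i (k, m)) mulr_sumr.
    apply: ler_sum => q /eqP qi; rewrite [X in _ <= X]mulrC; apply: ler_wpM2l.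
      exact: others_ge0.
    by have := hbud q i; rewrite qi.
  - move=> i k m; apply/andP; split.
      apply: sumr_ge0 => q _; apply: mulr_ge0; [exact: others_ge0|exact: (hfeas q).1].
    rewrite /x_int -[X in _ <= X]mulr1 -(others_sum hf1 i (k, m)) mulr_sumr.
    apply: ler_sum => q /eqP qi; rewrite [X in _ <= X]mulrC; apply: ler_wpM2l.
      exact: others_ge0.
    exact: hsize.
split => // U HU.
have := HU _ _ feas; rewrite /LP_objective /P_int (key f P).
by [].
Qed.
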